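(* Let $H$ be a graph on $m\le n$ vertices, regarded as a subgraph of $K_n$ on $m$ of its vertices. If there exists a $(v,k,1)$-design with $k\ge m$ and $v-k\ge n-m$, then \[\operatorname{scp}(K_n-H)\ \le\ \frac{n(v-1)}{k-1}+\operatorname{scp}(\overline{H})-m.\]
   Context: A $(v,k,1)$-design (with $k\ge 2$) is a pair $(P,\mathcal{B})$ where $|P|=v$ and $\mathcal{B}$ is a collection of $k$-subsets of $P$ such that every two distinct points lie in exactly one block. $\overline{H}$ is the complement of $H$ on its own $m$ vertices; $K_n-H$ is obtained from $K_n$ by deleting the edges of $H$. $\operatorname{scp}(G)$ is the minimum, over all families of cliques of $G$ covering each edge exactly once, of the sum of the clique sizes. *)

(* Defs.v *)
From mathcomp Require Import all_boot all_order all_algebra.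
Set Implicit Arguments. Unset Strict Implicit. Unset Printing Implicit Defensive.

(* A simple graph on a finite vertex type V is given by a relation e : rel V,
   assumed symmetric and irreflexive where needed. *)

Section Graphs.
Variable V : finType.

Definition is_clique (e : rel V) (C : {set V}) : bool :=
  [forall x in C, forall y in C, (x != y) ==> e x y].

Definition is_clique_partition (e : rel V) (F : {set {set V}}) : bool :=
  [forall C in F, is_clique e C] &&
  [forall x, forall y, e x y ==> (#|[set C in F | (x \in C) && (y \in C)]| == 1)].

Definition cp_weight (F : {set {set V}}) : nat := \sum_(C in F) #|C|.

Lemma clique_partition_exists (e : rel V) :
  symmetric e -> irreflexive e ->
  exists s, [exists F : {set {set V}}, is_clique_partition e F && (cp_weight F == s)].
Proof.
move=> esym eirr.
set F := [set [set x; y] | x in V, y in [pred y | e x y]].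
exists (cp_weight F); apply/existsP; exists F; rewrite eqxx andbT.
apply/andP; split.
  apply/forallP=> C; apply/implyP=> /imset2P [x y _]; rewrite inE => exy ->.
  apply/forallP=> a; apply/implyP; rewrite !inE => /orP [] /eqP ->;
  apply/forallP=> b; apply/implyP; rewrite !inE => /orP [] /eqP ->;
    apply/implyP; rewrite ?eqxx //= => _; rewrite ?exy //; by rewrite esym exy.
apply/forallP=> u; apply/forallP=> w; apply/implyP=> euw.
have uw : u != w by apply: contraTneq euw => ->; rewrite eirr.
apply/cards1P; exists [set u; w]; apply/setP=> C; rewrite !inE.
apply/idP/idP.
  rewrite /F; move=> /and3P [/imset2P [x y _]]; rewrite inE => exy ->.
  rewrite !inE => /orP [] /eqP ? /orP [] /eqP ?; subst;
    by rewrite ?eqxx ?setU1 // in uw *; rewrite setUC.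
move/eqP=> ->; rewrite !inE !eqxx orbT /=.
rewrite andbT /F; apply/imset2P; exists u w; by rewrite ?inE.
Qed.

Definition scp (e : rel V) (esym : symmetric e) (eirr : irreflexive e) : nat :=
  ex_minn (clique_partition_exists esym eirr).

End Graphs.

(* (v,k,1)-design on the point set 'I_v, with block collection B.  We require
   k <= v (blocks are k-subsets of a v-set), excluding the vacuous
   block-free "designs" on v <= 1 points with k > v. *)
Definition is_design (v k : nat) (B : {set {set 'I_v}}) : bool :=
  (2 <= k) && (k <= v) && [forall b in B, #|b| == k] &&
  [forall x, forall y, (x != y) ==> (#|[set b in B | (x \in b) && (y \in b)]| == 1)].

Definition compl_graph (W : finType) (h : rel W) : rel W :=
  fun x y => (x != y) && ~~ h x y.

(* K_n - H, where H lives on 'I_m and is placed on vertices f @: 'I_m of K_n *)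
Definition Kn_minus (m n : nat) (f : 'I_m -> 'I_n) (h : rel 'I_m) : rel 'I_n :=
  fun x y => (x != y) && ~~ [exists i, exists j, [&& f i == x, f j == y & h i j]].

Lemma compl_graph_sym (W : finType) (h : rel W) :
  symmetric h -> symmetric (compl_graph h).
Proof. by move=> hs x y; rewrite /compl_graph eq_sym hs. Qed.

Lemma compl_graph_irr (W : finType) (h : rel W) : irreflexive (compl_graph h).
Proof. by move=> x; rewrite /compl_graph eqxx. Qed.

Lemma Kn_minus_sym m n (f : 'I_m -> 'I_n) (h : rel 'I_m) :
  symmetric h -> symmetric (Kn_minus f h).
Proof.
move=> hs x y; rewrite /Kn_minus eq_sym; congr (_ && ~~ _).
apply/existsP/existsP=> [] [i /existsP [j /and3P [fi fj hij]]];
  exists j; apply/existsP; exists i; by rewrite fi fj hs hij.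
Qed.

Lemma Kn_minus_irr m n (f : 'I_m -> 'I_n) (h : rel 'I_m) :
  irreflexive (Kn_minus f h).
Proof. by move=> x; rewrite /Kn_minus eqxx. Qed.

(* Main.v *)
From mathcomp Require Import all_boot all_order all_algebra.
From mathcomp Require Import zify.
Require Import Defs.
Set Implicit Arguments. Unset Strict Implicit. Unset Printing Implicit Defensive.

Lemma card1_of (T : finType) (S : {set T}) c :
  c \in S -> (forall d, d \in S -> d = c) -> #|S| == 1.
Proof.
move=> cS H; apply/cards1P; exists c; apply/setP => d; rewrite inE.
by apply/idP/eqP => [/H|->].
Qed.

Lemma sum_setU_le (T : finType) (A B : {set T}) (w : T -> nat) :
  \sum_(x in A :|: B) w x <= \sum_(x in A) w x + \sum_(x in B) w x.
Proof.
rewrite (big_mkcond (fun x => x \in A :|: B)) (big_mkcond (fun x => x \in A))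
  (big_mkcond (fun x => x \in B)) -big_split /=.
apply: leq_sum => x _; rewrite inE.
by case: (x \in A); case: (x \in B) => //=; rewrite leq_addr.
Qed.

Lemma sum_imset_le (T U : finType) (F : T -> U) (P : {set T}) (w : U -> nat) :
  \sum_(y in F @: P) w y <= \sum_(x in P) w (F x).
Proof.
rewrite (partition_big_imset F) /=; apply: leq_sum => y /imsetP [x xP ->].
by rewrite (bigD1 x) /= ?xP ?eqxx // leq_addr.
Qed.

Lemma card_sum (T : finType) (Q : pred T) : #|[set u | Q u]| = \sum_u (Q u : nat).
Proof.
rewrite -sum1_card big_mkcond /=; apply: eq_bigr => u _; rewrite inE.
by case: (Q u).
Qed.

Lemma double_count (T U : finType) (P : {set T}) (R : T -> U -> bool) :
  \sum_(t in P) #|[set u | R t u]| = \sum_u #|[set t in P | R t u]|.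
Proof.
under eq_bigr do rewrite card_sum.
under [RHS]eq_bigr do rewrite card_sum.
rewrite exchange_big /=; apply: eq_bigr => u _.
rewrite big_mkcond /=; apply: eq_bigr => t _; by case: (t \in P).
Qed.

Lemma embed (T U : finType) (A : {set T}) (b0 : {set U}) (u0 : U) :
  #|A| <= #|b0| -> #|~: A| <= #|~: b0| ->
  exists g : T -> U, injective g /\ forall x, (g x \in b0) = (x \in A).
Proof.
move=> hA hAc.
pose g x := if x \in A then nth u0 (enum b0) (index x (enum A))
            else nth u0 (enum (~: b0)) (index x (enum (~: A))).
have gin x : (g x \in b0) = (x \in A).
  rewrite /g; case: ifP => xA.
    have : nth u0 (enum b0) (index x (enum A)) \in enum b0.
      apply: mem_nth; rewrite -cardE; apply: leq_trans hA.
      by rewrite cardE index_mem mem_enum.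
    by rewrite mem_enum.
  have : nth u0 (enum (~: b0)) (index x (enum (~: A))) \in enum (~: b0).
    apply: mem_nth; rewrite -cardE; apply: leq_trans hAc.
    by rewrite cardE index_mem mem_enum inE xA.
  by rewrite mem_enum inE => /negbTE.
exists g; split=> // x y gxy.
have eA : (x \in A) = (y \in A) by rewrite -gin gxy gin.
move: gxy; rewrite /g eA; case: ifP => yA.
  have xA : x \in A by rewrite eA.
  move/eqP; rewrite nth_uniq ?enum_uniq // -?cardE; first last.
  - by apply: leq_trans hA; rewrite cardE index_mem mem_enum.
  - by apply: leq_trans hA; rewrite cardE index_mem mem_enum.
  move/eqP=> hi; have := congr1 (nth x (enum A)) hi.
  by rewrite !nth_index ?mem_enum.
have xA : x \in ~: A by rewrite inE eA yA.
have yA' : y \in ~: A by rewrite inE yA.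
move/eqP; rewrite nth_uniq ?enum_uniq // -?cardE; first last.
- by apply: leq_trans hAc; rewrite cardE index_mem mem_enum.
- by apply: leq_trans hAc; rewrite cardE index_mem mem_enum.
move/eqP=> hi; have := congr1 (nth x (enum (~: A))) hi.
by rewrite !nth_index ?mem_enum.
Qed.

Lemma design_deg v k (B : {set {set 'I_v}}) : @is_design v k B ->
  forall p, #|[set b in B | p \in b]| * (k - 1) = v - 1.
Proof.
move=> /andP [/andP [/andP [hk hkv] hsz] hpair] p.
have := double_count B (fun b y => [&& p \in b, y \in b & y != p]).
have -> : \sum_(b in B) #|[set y | [&& p \in b, y \in b & y != p]]|
          = #|[set b in B | p \in b]| * (k - 1).
  rewrite -sum_nat_const big_mkcond [RHS]big_mkcond; apply: eq_bigr => b _.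
  rewrite inE; case bB: (b \in B) => //=; case pb: (p \in b) => /=.
    have -> : [set y | (y \in b) && (y != p)] = b :\ p.
      by apply/setP => y; rewrite !inE andbC.
    have := cardsD1 p b; rewrite pb (eqP (implyP (forallP hsz b) bB)) add1n.
    by move=> ->; rewrite subn1.
  by rewrite (_ : [set y | false] = set0) ?cards0 //; apply/setP=> y; rewrite !inE.
move=> ->; rewrite (bigD1 p) //= (_ : [set b in B | [&& p \in b, p \in b & p != p]] = set0);
  last by apply/setP=> b; rewrite !inE eqxx !andbF.
rewrite cards0 add0n (eq_bigr (fun _ => 1)); last first.
  move=> y yp; apply/eqP.
  have := implyP (forallP (forallP hpair p) y); rewrite eq_sym yp => /(_ isT) /eqP <-.
  by apply/eqP; apply: eq_card => b; rewrite !inE andbT.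
rewrite sum1dep_card; have := cardC1 p; rewrite card_ord subn1 => <-. by apply: eq_card => x; rewrite !inE.
Qed.

Lemma main_nat (m n : nat) (h : rel 'I_m)
  (hsym : symmetric h) (hirr : irreflexive h)
  (f : 'I_m -> 'I_n) (finj : injective f)
  (v k : nat) (B : {set {set 'I_v}}) (hB : @is_design v k B)
  (hkm : m <= k) (hvk : n - m <= v - k) :
  scp (Kn_minus_sym f hsym) (Kn_minus_irr f h) + m
    <= n * ((v - 1) %/ (k - 1)) + scp (compl_graph_sym hsym) (compl_graph_irr h).
Proof.
have hB' := hB; move: hB' => /andP [/andP [/andP [hk hkv] hsz] hpair].
set r := (v - 1) %/ (k - 1).
have hdeg p : #|[set b in B | p \in b]| = r.
  by rewrite /r -(design_deg hB p) mulnK // subn_gt0.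
have hv0 : 0 < v by apply: leq_trans hkv; apply: leq_trans hk.
have hv1 : 1 < v by apply: leq_trans hk hkv.
pose x0 := Ordinal hv0; pose x1 := Ordinal hv1.
have uniqb b b' x y : b \in B -> b' \in B -> x != y -> x \in b -> y \in b ->
    x \in b' -> y \in b' -> b = b'.
  move=> bB b'B xy xb yb xb' yb'.
  have /cards1P [c hc] := implyP (forallP (forallP hpair x) y) xy.
  have : b \in [set c] by rewrite -hc inE bB xb yb.
  have : b' \in [set c] by rewrite -hc inE b'B xb' yb'.
  by rewrite !inE => /eqP -> /eqP ->.
have exb x y : x != y -> exists2 b, b \in B & (x \in b) && (y \in b).
  move=> xy; have /cards1P [c hc] := implyP (forallP (forallP hpair x) y) xy.
  have : c \in [set c] by rewrite inE.
  by rewrite -hc inE => /andP [cB cxy]; exists c.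
have [b0 b0B /andP [_ _]] : exists2 b, b \in B & (x0 \in b) && (x1 \in b) by apply: exb.
have hb0 : #|b0| = k by apply/eqP; exact: (implyP (forallP hsz b0) b0B).
pose A := f @: [set: 'I_m].
have hA : #|A| = m by rewrite card_imset // cardsT card_ord.
have hAc : #|~: A| = n - m by have := cardsC A; rewrite hA card_ord => e; rewrite -[in RHS]e addKn.
have hb0c : #|~: b0| = v - k by have := cardsC b0; rewrite hb0 card_ord => e; rewrite -[in RHS]e addKn.
have [g [ginj gin]] : exists g : 'I_n -> 'I_v, injective g /\ forall x, (g x \in b0) = (x \in A).
  by apply: embed; rewrite ?hA ?hb0 ?hAc ?hb0c.
have fA i : f i \in A by apply: imset_f; rewrite inE.
have [F' hF' hFw] : exists2 F', is_clique_partition (compl_graph h) F' &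
    cp_weight F' = scp (compl_graph_sym hsym) (compl_graph_irr h).
  rewrite /scp; case: ex_minnP => s /existsP [F' /andP [hp /eqP hw]] _.
  by exists F'.
move: hF' => /andP [hF'cl hF'cov].
pose C (b : {set 'I_v}) := [set x | g x \in b].
pose F := [set C b | b in B :\ b0] :|: [set f @: (C' : {set 'I_m}) | C' in F'].
have gb0 x : x \in A -> g x \in b0 by rewrite gin.
have hF : is_clique_partition (Kn_minus f h) F.
  apply/andP; split.
    apply/forallP => X; apply/implyP; rewrite inE => /orP [].
      move=> /imsetP [b]; rewrite !inE => /andP [bnb0 bB] ->.
      apply/forallP => x; apply/implyP; rewrite inE => xb.
      apply/forallP => y; apply/implyP; rewrite inE => yb.
      apply/implyP => xy; rewrite /Kn_minus xy /=.
      apply/negP => /existsP [i /existsP [j /and3P [/eqP fi /eqP fj _]]].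
      have gxy : g x != g y by rewrite (inj_eq ginj).
      have gx0 : g x \in b0 by rewrite gin -fi.
      have gy0 : g y \in b0 by rewrite gin -fj.
      by move/eqP: bnb0; apply; apply: (uniqb _ _ _ _ bB b0B gxy).
    move=> /imsetP [C' C'F ->].
    have cl := implyP (forallP hF'cl C') C'F.
    apply/forallP => x; apply/implyP => /imsetP [i iC ->].
    apply/forallP => y; apply/implyP => /imsetP [j jC ->].
    apply/implyP => xy; rewrite /Kn_minus xy /=.
    have ij : i != j by apply: contraNneq xy => ->.
    have := implyP (forallP (implyP (forallP cl i) iC) j) jC.
    rewrite ij /= /compl_graph ij /= => nh.
    apply/negP => /existsP [i' /existsP [j' /and3P [/eqP fi /eqP fj hij]]].
    by move: hij; rewrite (finj _ _ fi) (finj _ _ fj) (negbTE nh).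
  apply/forallP => x; apply/forallP => y; apply/implyP => exy.
  move: (exy); rewrite /Kn_minus => /andP [xy nH].
  case: (boolP ((x \in A) && (y \in A))) => [/andP [xA yA] | nA].
    move: xA yA => /imsetP [i _ Ex] /imsetP [j _ Ey]; subst x y.
    have ij : i != j by apply: contraNneq xy => ->.
    have nh : ~~ h i j.
      apply: contra nH => hij; apply/existsP; exists i; apply/existsP; exists j.
      by rewrite !eqxx hij.
    have ce : compl_graph h i j by rewrite /compl_graph ij nh.
    have /cards1P [C' hC'] := implyP (forallP (forallP hF'cov i) j) ce.
    have : C' \in [set C'] by rewrite inE.
    rewrite -hC' inE => /and3P [C'F iC jC].
    apply: (@card1_of _ _ (f @: C')).
      rewrite !inE; apply/and3P; split; [apply/orP; right; exact: imset_f | exact: imset_f | exact: imset_f].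
    move=> D; rewrite !inE => /and3P [DF xD yD]; move: DF => /orP [].
      move=> /imsetP [b]; rewrite !inE => /andP [bnb0 bB] DE.
      move: xD yD; rewrite DE !inE => xb yb.
      have gxy : g (f i) != g (f j) by rewrite (inj_eq ginj).
      have gx0 : g (f i) \in b0 by rewrite gin.
      have gy0 : g (f j) \in b0 by rewrite gin.
      by move/eqP: bnb0; case; apply: (uniqb _ _ _ _ bB b0B gxy).
    move=> /imsetP [D' D'F DE]; move: xD yD; rewrite DE !mem_imset // => iD jD.
    have : D' \in [set C'] by rewrite -hC' inE D'F iD jD.
    by rewrite inE => /eqP ->.
  have gxy : g x != g y by rewrite (inj_eq ginj).
  have [b bB /andP [gxb gyb]] := exb _ _ gxy.
  have bnb0 : b != b0.
    apply: contra nA => /eqP bb0; move: gxb gyb; rewrite bb0 !gin => -> ->.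
    done.
  apply: (@card1_of _ _ (C b)).
    rewrite !inE gxb gyb !andbT; apply/orP; left; apply: imset_f.
    by rewrite !inE bnb0 bB.
  move=> D; rewrite !inE => /and3P [DF xD yD]; move: DF => /orP [].
    move=> /imsetP [b']; rewrite !inE => /andP [_ b'B] DE; subst D.
    move: xD yD; rewrite !inE => xb yb.
    by rewrite (uniqb _ _ _ _ b'B bB gxy xb yb gxb gyb).
  move=> /imsetP [D' D'F DE]; move: xD yD; rewrite DE => /imsetP [i _ Ex] /imsetP [j _ Ey].
  by move: nA; rewrite Ex Ey !fA.
have hW : cp_weight F + m <= n * r + cp_weight F'.
  rewrite /cp_weight.
  have e1 : \sum_(b in B) #|C b| = n * r.
    have := double_count B (fun b x => g x \in b) => /= ->.
    rewrite (eq_bigr (fun _ => r)); last by move=> x _; exact: hdeg.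
    by rewrite sum_nat_const card_ord.
  have e2 : #|C b0| = m by rewrite -hA; apply: eq_card => x; rewrite inE gin.
  rewrite (big_setD1 b0) //= e2 in e1.
  have s1 := sum_imset_le C (B :\ b0) (fun X => #|X|).
  have s2 : \sum_(X in [set f @: (C' : {set 'I_m}) | C' in F']) #|X| <= \sum_(C' in F') #|C'|.
    apply: leq_trans (sum_imset_le (fun C' : {set 'I_m} => f @: C') F' (fun X => #|X|)) _.
    by rewrite leq_eqVlt; apply/orP; left; apply/eqP; apply: eq_bigr => C' _; exact: card_imset.
  have s3 := sum_setU_le [set C b | b in B :\ b0] [set f @: (C' : {set 'I_m}) | C' in F'] (fun X => #|X|).
  rewrite -e1; apply: leq_trans (leq_add (leq_trans s3 (leq_add s1 s2)) (leqnn m)) _.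
  by rewrite addnC addnA.
rewrite -hFw; apply: leq_trans hW; rewrite leq_add2r.
rewrite /scp; case: ex_minnP => s _ hmin; apply: hmin.
by apply/existsP; exists F; rewrite hF eqxx.
Qed.

Import Order.TTheory GRing.Theory Num.Theory.
From mathcomp Require Import lra.
Local Open Scope ring_scope.

Theorem mainTheorem10 (m n : nat) (h : rel 'I_m)
  (hsym : symmetric h) (hirr : irreflexive h)
  (f : 'I_m -> 'I_n) (finj : injective f) (hmn : (m <= n)%N)
  (v k : nat)
  (hdes : exists B : {set {set 'I_v}}, @is_design v k B)
  (hkm : (m <= k)%N) (hvk : (n - m <= v - k)%N) :
  ((scp (Kn_minus_sym f hsym) (Kn_minus_irr f h))%:R : rat)
    <= (n%:R * (v%:R - 1)) / (k%:R - 1)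
       + (scp (compl_graph_sym hsym) (compl_graph_irr h))%:R - m%:R.
Proof.
case: hdes => B hB.
have H := main_nat hsym hirr finj hB hkm hvk.
have hB' := hB; move: hB' => /andP [/andP [/andP [hk hkv] _] _].
have hv0 : (0 < v)%N by apply: leq_trans hkv; apply: leq_trans hk.
have e := design_deg hB (Ordinal hv0).
move: H; rewrite -e mulnK ?subn_gt0 //.
set d := #|_|.
set s1 := scp _ _; set s2 := scp _ _ => H.
have k1 : (1 <= k)%N by apply: leq_trans hk.
have v1 : (1 <= v)%N by [].
have ev : (v%:R : rat) - 1 = d%:R * (k%:R - 1).
  have := congr1 (fun x : nat => (x%:R : rat)) e => /=.
  by rewrite natrM !natrB // !mulr1n => ->.
have k0 : (k%:R : rat) - 1 != 0.
  have := natrB rat k1; rewrite mulr1n => <-.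
  by rewrite pnatr_eq0 -lt0n subn_gt0.
rewrite ev mulrA mulfK //.
have := H; rewrite -(ler_nat rat) natrD natrD natrM => H'.
lra.
Qed.
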